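(* For every odd $k\ge 13$, the set $AP_{3k,k}$ contains an ascending partition $\mathcal P$ with $\mathrm{slack}(\mathcal P)\ge 0$ that is non-equitable; and for every odd $k\ge 21$, the set $AP_{3k-1,k}$ contains an ascending partition $\mathcal P$ with $\mathrm{slack}(\mathcal P)\ge 0$ that is non-equitable.
   Context: $[n]=\{1,\ldots,n\}$ and $s^{n,k}=\frac{n(n+1)}{2k}$. An ascending partition of $n$ of size $k$ is a sequence of positive integers $[p_1,\ldots,p_k]$ with $p_1\le\cdots\le p_k$ and $\sum_i p_i=n$; $AP_{n,k}$ is the set of all such partitions when $s^{n,k}$ is an integer (and empty otherwise). $\mathcal P$ is equitable if $[n]$ can be partitioned into sets $A_1,\dots,A_k$ with $|A_i|=p_i$ all having the same element sum. For $j=1,\ldots,k$, $\mathrm{slack}_j(\mathcal P)=\sum_{i=1}^{p_1+\cdots+p_j}(n-i+1)-j\,s^{n,k}$, and $\mathrm{slack}(\mathcal P)=\min_{1\le j\le k-1}\mathrm{slack}_j(\mathcal P)$. *)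

(* Defs.v *)
From mathcomp Require Import all_boot all_order all_algebra.
Set Implicit Arguments. Unset Strict Implicit. Unset Printing Implicit Defensive.
Import Order.TTheory GRing.Theory Num.Theory.

(* A partition P = [p_1; ...; p_k] is represented by a seq nat; p_i = nth 0 P (i-1). *)

(* s^{n,k} = n(n+1)/(2k); only meaningful when 2k divides n(n+1). *)
Definition s_nk (n k : nat) : nat := (n * n.+1) %/ (2 * k).

Definition in_AP (n k : nat) (P : seq nat) : bool :=
  [&& (2 * k %| n * n.+1), size P == k, all (fun x => 0 < x) P,
      sorted leq P & sumn P == n].

Definition slack_j (n : nat) (P : seq nat) (j : nat) : int :=
  ((\sum_(1 <= i < (sumn (take j P)).+1) (n - i + 1)%N)%:Z
   - (j * s_nk n (size P))%:Z)%R.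

(* slack(P) = min_{1 <= j <= k-1} slack_j(P) (k >= 2 assumed by callers). *)
Definition slack (n : nat) (P : seq nat) : int :=
  \big[Order.min/slack_j n P 1]_(1 <= j < (size P)) slack_j n P j.

(* P is equitable: [n] = {1..n} splits into disjoint A_1..A_k with |A_i| = p_i
   and equal element sums.  Element x : 'I_n represents the integer x+1. *)
Definition equitable (n : nat) (P : seq nat) : Prop :=
  exists A : 'I_(size P) -> {set 'I_n},
    [/\ forall i j, i != j -> [disjoint A i & A j],
        \bigcup_(i < size P) A i = [set: 'I_n],
        forall i : 'I_(size P), #|A i| = nth 0 P i
      & forall i j : 'I_(size P),
          \sum_(x in A i) (x : nat).+1 = \sum_(x in A j) (x : nat).+1].

(* Main.v *)
Require Import Defs.
From mathcomp Require Import all_boot all_order all_algebra zify.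
Import Order.TTheory GRing.Theory Num.Theory.

Lemma sumT n L : L <= n -> 2 * \sum_(1 <= i < L.+1) (n - i + 1) = L * (2 * n - L + 1).
Proof.
elim: L => [|L IH] hL; first by rewrite big_geq.
rewrite big_nat_recr //= mulnDr IH; last by lia.
nia.
Qed.

Lemma sumn_take_le j P : sumn (take j P) <= sumn P.
Proof. by rewrite -{2}(cat_take_drop j P) sumn_cat leq_addr. Qed.

Lemma slack_ge0 n P : 1 < size P -> sumn P <= n ->
  (forall j, 0 < j < size P ->
     2 * j * s_nk n (size P) <= sumn (take j P) * (2 * n - sumn (take j P) + 1)) ->
  (0 <= slack n P)%R.
Proof.
move=> h1 hn hj.
have hsj : forall j, 0 < j < size P -> (0 <= slack_j n P j)%R.
  move=> j hj'; rewrite /slack_j subr_ge0 lez_nat.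
  have hL : sumn (take j P) <= n by apply: leq_trans (sumn_take_le j P) hn.
  have := sumT _ _ hL; have := hj j hj'; nia.
rewrite /slack big_seq.
apply: (big_ind (fun x : int => 0 <= x)%R).
- by apply: hsj; rewrite h1.
- by move=> x y hx hy; rewrite le_min hx hy.
- by move=> j; rewrite mem_index_iota => hj'; apply: hsj.
Qed.

Lemma slack_ge0_b n P : 1 < size P -> sumn P <= n ->
  all (fun j => 2 * j * s_nk n (size P) <= sumn (take j P) * (2 * n - sumn (take j P) + 1))
      (iota 1 (size P).-1) ->
  (0 <= slack n P)%R.
Proof.
move=> h1 hn /allP ha; apply: slack_ge0 => // j hj; apply: ha.
rewrite mem_iota; lia.
Qed.

Lemma sumn_take_nseq j a c s :
  sumn (take j (nseq a c ++ s)) = c * minn j a + sumn (take (j - a) s).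
Proof.
rewrite take_cat size_nseq; case: ltnP => h.
  rewrite take_nseq ?(ltnW h) // sumn_nseq.
  have -> : j - a = 0 by lia.
  by rewrite take0 /= addn0 mulnC; congr (_ * _); lia.
by rewrite sumn_cat sumn_nseq mulnC; congr (_ * _ + _); lia.
Qed.

Lemma sorted_nseq_cat a c s : sorted leq s -> all (leq c) s -> sorted leq (nseq a c ++ s).
Proof.
move=> hs ha; elim: a => [|a IH] //=.
rewrite (path_sortedE leq_trans) IH andbT all_cat ha andbT.
by apply/allP => x; rewrite mem_nseq => /andP[_ /eqP ->].
Qed.

Definition w (x : nat) : nat := (x == 2) * 2 + (x == 3).

Lemma sum_w_nseq a c s : \sum_(x <- nseq a c ++ s) w x = a * w c + \sum_(x <- s) w x.
Proof.
elim: a => [|a IH]; first by rewrite /= add0n.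
by rewrite /= big_cons IH mulSn addnA.
Qed.

Lemma tri_sum n : 2 * \sum_(x < n) x.+1 = n * n.+1.
Proof.
rewrite -(big_mkord xpredT (fun x => x.+1)).
elim: n => [|n IH]; first by rewrite big_geq.
rewrite big_nat_recr //= mulnDr IH; nia.
Qed.

Lemma cardH_le n h : \sum_(x < n) (h <= x.+1) <= n + 1 - h.
Proof.
rewrite -(big_mkord xpredT (fun x => (h <= x.+1) : nat)).
elim: n => [|n IH]; first by rewrite big_geq.
rewrite big_nat_recr //=; case: (leqP h n.+1) => H /=; lia.
Qed.

Lemma two_set n s (X : {set 'I_n}) : #|X| = 2 -> \sum_(x in X) (x : nat).+1 = s ->
  2 <= \sum_(x in X) (s - n <= (x : nat).+1).
Proof.
move=> /eqP/cards2P [y [z [yz ->]]].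
have yz' : y \notin [set z] by rewrite inE.
rewrite !big_setU1 // !big_set1 => hs.
change (y.+1 + z.+1 = s) in hs.
change (2 <= (s - n <= y.+1) + (s - n <= z.+1)).
have := ltn_ord y; have := ltn_ord z => hy hz.
have -> : s - n <= y.+1 by lia.
have -> : s - n <= z.+1 by lia.
by [].
Qed.

Lemma three_set n s (X : {set 'I_n}) : #|X| = 3 -> \sum_(x in X) (x : nat).+1 = s ->
  3 * (s - n) < s + 6 -> 1 <= \sum_(x in X) (s - n <= (x : nat).+1).
Proof.
move=> hX.
have : 0 < #|X| by rewrite hX.
move=> /card_gt0P [x hx].
have : #|X :\ x| == 2 by apply/eqP; move: hX; rewrite (cardsD1 x) hx /=; lia.
move=> /cards2P [y [z [yz Eyz]]].
have xn : x \notin X :\ x by rewrite !inE eqxx.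
rewrite -(setD1K hx) Eyz.
rewrite Eyz !inE negb_or in xn; case/andP: xn => xy xz.
have yz' : y \notin [set z] by rewrite inE.
have xyz : x \notin [set y; z] by rewrite !inE negb_or xy xz.
rewrite !big_setU1 // !big_set1 => hs h3.
change (x.+1 + (y.+1 + z.+1) = s) in hs.
change (1 <= (s - n <= x.+1) + ((s - n <= y.+1) + (s - n <= z.+1))).
have xy' : (x : nat) <> y by move=> E; move: xy; rewrite (ord_inj E) eqxx.
have xz' : (x : nat) <> z by move=> E; move: xz; rewrite (ord_inj E) eqxx.
have yz2 : (y : nat) <> z by move=> E; move: yz; rewrite (ord_inj E) eqxx.
have := ltn_ord y; have := ltn_ord z; have := ltn_ord x => hx' hy hz.
case: (leqP (s - n) x.+1) => h1; case: (leqP (s - n) y.+1) => h2;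
  case: (leqP (s - n) z.+1) => h3' /=; lia.
Qed.

Lemma partition_sum n k (A : 'I_k -> {set 'I_n}) (g : 'I_n -> nat) :
  (forall i j, i != j -> [disjoint A i & A j]) ->
  \bigcup_(i < k) A i = [set: 'I_n] ->
  \sum_(x < n) g x = \sum_(i < k) \sum_(x in A i) g x.
Proof.
move=> hd hc.
transitivity (\sum_(i < k) \sum_(x < n) (x \in A i) * g x).
  rewrite exchange_big /=; apply: eq_bigr => x _.
  rewrite -big_distrl /=.
  have : x \in \bigcup_(i < k) A i by rewrite hc inE.
  case/bigcupP => i0 _ hi0.
  rewrite (bigD1 i0) //= hi0 big1 ?addn0 ?mul1n // => i hi.
  by rewrite (disjointFr (hd i0 i _) hi0) // eq_sym.
apply: eq_bigr => i _; rewrite [RHS]big_mkcond /=; apply: eq_bigr => x _.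
by case: (x \in A i); rewrite ?mul1n ?mul0n.
Qed.

Lemma noneq n P s : n * n.+1 = 2 * size P * s -> 0 < size P -> n <= s ->
  3 * (s - n) < s + 6 -> n + 1 - (s - n) < \sum_(x <- P) w x -> ~ equitable n P.
Proof.
move=> Hs Hk Hns H3 Hw [A [Hdis Hcov Hcard Hsum]].
pose i0 : 'I_(size P) := Ordinal Hk.
have sumA : forall i, \sum_(x in A i) (x : nat).+1 = s.
  move=> i; rewrite (Hsum i i0).
  have E := partition_sum _ _ _ (fun x : 'I_n => (x : nat).+1) Hdis Hcov.
  have E2 : \sum_(j < size P) \sum_(x in A j) (x : nat).+1 = \sum_(j < size P) \sum_(x in A i0) (x : nat).+1.
    by apply: eq_bigr => j _; exact: Hsum.
  rewrite E2 sum_nat_const card_ord in E.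
  have := tri_sum n; rewrite E Hs; nia.
have lb : forall i : 'I_(size P), w (nth 0 P i) <= \sum_(x in A i) (s - n <= (x : nat).+1).
  move=> i; rewrite -Hcard.
  case E: #|A i| => [|[|[|[|c]]]] //.
    by rewrite /w /=; apply: two_set => //; apply: sumA.
  by rewrite /w /=; apply: three_set => //; apply: sumA.
have := cardH_le n (s - n).
rewrite (partition_sum _ _ _ _ Hdis Hcov).
have : \sum_(x <- P) w x <= \sum_(i < size P) \sum_(x in A i) (s - n <= (x : nat).+1).
  rewrite (big_nth 0) big_mkord; apply: leq_sum => i _; apply: lb.
lia.
Qed.

Definition P4 a b x y := nseq a 2 ++ nseq b 3 ++ nseq x 6 ++ nseq y 7.

Lemma P4_size a b x y : size (P4 a b x y) = a + b + x + y.
Proof. by rewrite /P4 !size_cat !size_nseq !addnA. Qed.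

Lemma P4_sumn a b x y : sumn (P4 a b x y) = 2 * a + 3 * b + 6 * x + 7 * y.
Proof. by rewrite /P4 !sumn_cat !sumn_nseq; lia. Qed.

Lemma P4_take a b x y j : sumn (take j (P4 a b x y)) =
  2 * minn j a + 3 * minn (j - a) b + 6 * minn (j - a - b) x + 7 * minn (j - a - b - x) y.
Proof.
rewrite /P4 sumn_take_nseq sumn_take_nseq sumn_take_nseq -[nseq y 7]cats0 sumn_take_nseq.
rewrite /=; lia.
Qed.

Lemma P4_w a b x y : \sum_(z <- P4 a b x y) w z = 2 * a + b.
Proof.
rewrite /P4 !sum_w_nseq -[nseq y 7]cats0 sum_w_nseq big_nil /w /=; lia.
Qed.

Lemma P4_sorted a b x y : sorted leq (P4 a b x y).
Proof.
rewrite /P4; apply: sorted_nseq_cat.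
  apply: sorted_nseq_cat.
    apply: sorted_nseq_cat; first by rewrite -[nseq y 7]cats0; apply: sorted_nseq_cat.
    by apply/allP => z; rewrite mem_nseq => /andP[_ /eqP ->].
  by apply/allP => z; rewrite mem_cat !mem_nseq => /orP[] /andP[_ /eqP ->].
by apply/allP => z; rewrite !mem_cat !mem_nseq => /orP[|/orP[]] /andP[_ /eqP ->].
Qed.

Lemma P4_pos a b x y : all (fun z => 0 < z) (P4 a b x y).
Proof.
by apply/allP => z; rewrite /P4 !mem_cat !mem_nseq => /orP[|/orP[|/orP[]]] /andP[_ /eqP ->].
Qed.

Lemma P4_slack n s a b x y : s_nk n (size (P4 a b x y)) = s ->
  1 < size (P4 a b x y) -> sumn (P4 a b x y) <= n ->
  (forall d, 1 <= d <= a -> 2 * d * s <= (2 * d) * (2 * n - 2 * d + 1)) ->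
  (forall d, d <= b -> 2 * (a + d) * s <= (2 * a + 3 * d) * (2 * n - (2 * a + 3 * d) + 1)) ->
  (forall d, d <= x -> 2 * (a + b + d) * s <=
       (2 * a + 3 * b + 6 * d) * (2 * n - (2 * a + 3 * b + 6 * d) + 1)) ->
  (forall d, d < y -> 2 * (a + b + x + d) * s <=
       (2 * a + 3 * b + 6 * x + 7 * d) * (2 * n - (2 * a + 3 * b + 6 * x + 7 * d) + 1)) ->
  (0 <= slack n (P4 a b x y))%R.
Proof.
move=> hs h1 hn S1 S2 S3 S4; apply: slack_ge0 => // j.
rewrite hs P4_take P4_size => hj.
have [h|h] : j <= a \/ a < j by lia.
  have := S1 j; have -> : minn j a = j by lia.
  have -> : j - a = 0 by lia.
  rewrite !sub0n !min0n !muln0 !addn0; apply; lia.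
have [h2|h2] : j <= a + b \/ a + b < j by lia.
  have := S2 (j - a); have -> : minn j a = a by lia.
  have -> : minn (j - a) b = j - a by lia.
  have -> : j - a - b = 0 by lia.
  have -> : a + (j - a) = j by lia.
  rewrite !sub0n !min0n !muln0 !addn0; apply; lia.
have [h3|h3] : j <= a + b + x \/ a + b + x < j by lia.
  have := S3 (j - a - b); have -> : minn j a = a by lia.
  have -> : minn (j - a) b = b by lia.
  have -> : minn (j - a - b) x = j - a - b by lia.
  have -> : j - a - b - x = 0 by lia.
  have -> : a + b + (j - a - b) = j by lia.
  rewrite !min0n !muln0 !addn0; apply; lia.
have := S4 (j - a - b - x); have -> : minn j a = a by lia.
have -> : minn (j - a) b = b by lia.
have -> : minn (j - a - b) x = x by lia.
have -> : minn (j - a - b - x) y = j - a - b - x by lia.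
have -> : a + b + x + (j - a - b - x) = j by lia.
rewrite !addnA; apply; lia.
Qed.

Lemma fam n k s a b x y : k = a + b + x + y -> n * n.+1 = 2 * k * s -> 1 < k ->
  2 * a + 3 * b + 6 * x + 7 * y = n -> n <= s -> 3 * (s - n) < s + 6 ->
  n + 1 - (s - n) < 2 * a + b ->
  (forall d, 1 <= d <= a -> 2 * d * s <= (2 * d) * (2 * n - 2 * d + 1)) ->
  (forall d, d <= b -> 2 * (a + d) * s <= (2 * a + 3 * d) * (2 * n - (2 * a + 3 * d) + 1)) ->
  (forall d, d <= x -> 2 * (a + b + d) * s <=
       (2 * a + 3 * b + 6 * d) * (2 * n - (2 * a + 3 * b + 6 * d) + 1)) ->
  (forall d, d < y -> 2 * (a + b + x + d) * s <=
       (2 * a + 3 * b + 6 * x + 7 * d) * (2 * n - (2 * a + 3 * b + 6 * x + 7 * d) + 1)) ->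
  exists P, in_AP n k P /\ (0 <= slack n P)%R /\ ~ equitable n P.
Proof.
move=> hk hs h1 hn hns h3 hw S1 S2 S3 S4.
have hsz : size (P4 a b x y) = k by rewrite P4_size.
have hsnk : s_nk n k = s by rewrite /s_nk hs mulKn //; lia.
exists (P4 a b x y); split; last split.
- rewrite /in_AP hsz eqxx P4_pos P4_sorted P4_sumn hn eqxx hs dvdn_mulr //.
- apply: (P4_slack n s a b x y); rewrite ?hsz ?P4_sumn ?hn //.
- apply: (noneq n (P4 a b x y) s); [by rewrite hsz | by rewrite hsz; lia | done | done | by rewrite P4_w].
Qed.

Lemma conc n P s : in_AP n (size P) P -> n * n.+1 = 2 * size P * s -> 1 < size P ->
  n <= s -> 3 * (s - n) < s + 6 -> n + 1 - (s - n) < \sum_(x <- P) w x ->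
  all (fun j => 2 * j * s_nk n (size P) <= sumn (take j P) * (2 * n - sumn (take j P) + 1))
      (iota 1 (size P).-1) ->
  exists Q, in_AP n (size P) Q /\ (0 <= slack n Q)%R /\ ~ equitable n Q.
Proof.
move=> hap hs h1 hns h3 hw ha; exists P; split => //; split.
  apply: slack_ge0_b => //.
  by move: hap => /and5P[_ _ _ _ /eqP ->].
apply: noneq hw => //; lia.
Qed.

Lemma c13 : exists P, in_AP (3 * 13) 13 P /\ (0 <= slack (3 * 13) P)%R /\ ~ equitable (3 * 13) P.
Proof.
apply: (@conc (3 * 13) (nseq 9 2 ++ [:: 3; 3; 7; 8]) 60).
all: try (vm_compute; reflexivity).
all: by rewrite !big_cat !big_cons big_nil.
Qed.

Lemma c15 : exists P, in_AP (3 * 15) 15 P /\ (0 <= slack (3 * 15) P)%R /\ ~ equitable (3 * 15) P.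
Proof.
apply: (@conc (3 * 15) (nseq 10 2 ++ [:: 3; 3; 3; 8; 8]) 69).
all: try (vm_compute; reflexivity).
all: by rewrite !big_cat !big_cons big_nil.
Qed.

Lemma c19 : exists P, in_AP (3 * 19) 19 P /\ (0 <= slack (3 * 19) P)%R /\ ~ equitable (3 * 19) P.
Proof.
apply: (@conc (3 * 19) (nseq 13 2 ++ [:: 3; 3; 3; 7; 7; 8]) 87).
all: try (vm_compute; reflexivity).
all: by rewrite !big_cat !big_cons big_nil.
Qed.

Lemma d21 : exists P, in_AP (3 * 21 - 1) 21 P /\ (0 <= slack (3 * 21 - 1) P)%R /\ ~ equitable (3 * 21 - 1) P.
Proof.
apply: (@conc (3 * 21 - 1) (nseq 15 2 ++ [:: 3; 3; 3; 7; 8; 8]) 93).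
all: try (vm_compute; reflexivity).
all: by rewrite !big_cat !big_cons big_nil.
Qed.

Lemma d25 : exists P, in_AP (3 * 25 - 1) 25 P /\ (0 <= slack (3 * 25 - 1) P)%R /\ ~ equitable (3 * 25 - 1) P.
Proof.
apply: (@conc (3 * 25 - 1) (nseq 18 2 ++ [:: 3; 3; 3; 7; 7; 7; 8]) 111).
all: try (vm_compute; reflexivity).
all: by rewrite !big_cat !big_cons big_nil.
Qed.

Lemma F1 u : exists P, in_AP (3 * (4 * u + 17)) (4 * u + 17) P /\
  (0 <= slack (3 * (4 * u + 17)) P)%R /\ ~ equitable (3 * (4 * u + 17)) P.
Proof.
apply: (fam (3 * (4 * u + 17)) (4 * u + 17) (18 * u + 78) (3 * u + 12) 2 u 3).
all: (try move=> d hd); nia.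
Qed.

Lemma F2 u : exists P, in_AP (3 * (4 * u + 23)) (4 * u + 23) P /\
  (0 <= slack (3 * (4 * u + 23)) P)%R /\ ~ equitable (3 * (4 * u + 23)) P.
Proof.
apply: (fam (3 * (4 * u + 23)) (4 * u + 23) (18 * u + 105) (3 * u + 16) 3 u 4).
all: (try move=> d hd); nia.
Qed.

Lemma F3 u : exists P, in_AP (3 * (4 * u + 23) - 1) (4 * u + 23) P /\
  (0 <= slack (3 * (4 * u + 23) - 1) P)%R /\ ~ equitable (3 * (4 * u + 23) - 1) P.
Proof.
apply: (fam (3 * (4 * u + 23) - 1) (4 * u + 23) (18 * u + 102) (3 * u + 17) 2 u 4).
all: (try move=> d hd); nia.
Qed.

Lemma F4 u : exists P, in_AP (3 * (4 * u + 29) - 1) (4 * u + 29) P /\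
  (0 <= slack (3 * (4 * u + 29) - 1) P)%R /\ ~ equitable (3 * (4 * u + 29) - 1) P.
Proof.
apply: (fam (3 * (4 * u + 29) - 1) (4 * u + 29) (18 * u + 129) (3 * u + 21) 3 u 5).
all: (try move=> d hd); nia.
Qed.

Theorem mainTheorem4 :
  (forall k : nat, odd k -> 13 <= k ->
     exists P : seq nat, in_AP (3 * k) k P /\ (0 <= slack (3 * k) P)%R
                         /\ ~ equitable (3 * k) P) /\
  (forall k : nat, odd k -> 21 <= k ->
     exists P : seq nat, in_AP (3 * k - 1) k P /\ (0 <= slack (3 * k - 1) P)%R
                         /\ ~ equitable (3 * k - 1) P).
Proof.
split=> k hodd hk; have hm : k %% 2 = 1 by rewrite modn2 hodd.
- have [t [ht|ht]] : exists t, k = 4 * t + 1 \/ k = 4 * t + 3 by exists (k %/ 4); lia.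
  + have : k = 13 \/ 17 <= k by lia.
    case=> [->|h]; first exact: c13.
    have -> : k = 4 * (t - 4) + 17 by lia.
    exact: F1.
  + have : k = 15 \/ k = 19 \/ 23 <= k by lia.
    case=> [->|[->|h]]; [exact: c15 | exact: c19 |].
    have -> : k = 4 * (t - 5) + 23 by lia.
    exact: F2.
- have [t [ht|ht]] : exists t, k = 4 * t + 1 \/ k = 4 * t + 3 by exists (k %/ 4); lia.
  + have : k = 21 \/ k = 25 \/ 29 <= k by lia.
    case=> [->|[->|h]]; [exact: d21 | exact: d25 |].
    have -> : k = 4 * (t - 7) + 29 by lia.
    exact: F4.
  + have -> : k = 4 * (t - 5) + 23 by lia.
    exact: F3.
Qed.
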